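(* Every connected finite-dimensional $\Delta$-complex $\mathcal C$ admits an immersion into a $\Delta$-complex that has exactly one $0$-cell.
   Context: A $\Delta$-complex is a CW-complex $\mathcal C$ in which each $k$-cell $c$ has a distinguished characteristic map $\sigma_c\colon\Delta^k\to\mathcal C$, where $\Delta^k=[v_0,\dots,v_k]$ is the standard $k$-simplex with ordered vertices $v_0<\dots<v_k$, such that the restriction of $\sigma_c$ to each $(k-1)$-dimensional face (identified with $\Delta^{k-1}$ via the order-preserving linear homeomorphism) is the distinguished characteristic map of some $(k-1)$-cell. A map $f\colon\mathcal D\to\mathcal C$ between $\Delta$-complexes commutes with the characteristic maps if for every $k$-cell $d$ of $\mathcal D$, $f(d)$ is a $k$-cell of $\mathcal C$ and $f\circ\sigma_d=\sigma_{f(d)}$. An immersion is a continuous map that commutes with the characteristic maps and is a local homeomorphism onto its image (every point has an open neighbourhood $U$ with $f|_U$ a homeomorphism onto $f(U)\subseteq f(\mathcal D)$). *)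

(* Defs.v *)
From Stdlib Require Import Reals List Arith.
Import ListNotations.
Open Scope R_scope.

(* A Delta-complex, given by its combinatorial data (a semi-simplicial set):
   [cell k] are the k-cells, [face k i c] is the i-th face (0 <= i <= k+1)
   of the (k+1)-cell c, i.e. the cell whose distinguished characteristic map
   is the restriction of sigma_c to the face [v_0,..,^v_i,..,v_(k+1)]. The space itself is the geometric
   realization [Pt] below, with the weak (CW) topology [is_open]. *)
Record DeltaComplex := {
  cell : nat -> Type;
  face : forall k : nat, nat -> cell (S k) -> cell k;
  face_rel : forall (k i j : nat) (c : cell (S (S k))),
      (i < j)%nat -> (j <= S (S k))%nat ->
      face k i (face (S k) j c) = face k (j - 1) (face (S k) i c)
}.

Definition lsum (l : list R) : R := fold_right Rplus 0 l.

Definition in_simplex (k : nat) (l : list R) : Prop :=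
  length l = S k /\ Forall (fun x => 0 <= x) l /\ lsum l = 1.

Definition in_open_simplex (k : nat) (l : list R) : Prop :=
  length l = S k /\ Forall (fun x => 0 < x) l /\ lsum l = 1.

Definition close (eps : R) (l l' : list R) : Prop :=
  length l' = length l /\
  forall i, (i < length l)%nat -> Rabs (nth i l 0 - nth i l' 0) < eps.

Fixpoint find_zero (l : list R) : option nat :=
  match l with
  | [] => None
  | x :: l' => if Req_EM_T x 0 then Some 0%nat
               else match find_zero l' with Some i => Some (S i) | None => None end
  end.

Fixpoint remove_nth (i : nat) (l : list R) : list R :=
  match i, l with
  | _, [] => []
  | O, _ :: l' => l'
  | S i', x :: l' => x :: remove_nth i' l'
  end.

Definition RawPt (X : DeltaComplex) : Type := { k : nat & (cell X k * list R)%type }.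

(* genuine points: a cell and a point of the interior of its simplex;
   every point of |X| is uniquely of this form *)
Definition IsPt (X : DeltaComplex) (p : RawPt X) : Prop :=
  in_open_simplex (projT1 p) (snd (projT2 p)).

(* the distinguished characteristic map sigma_c : Delta^k -> |X|,
   applied to a point l of the closed simplex: pass to the face
   spanned by the support of l *)
Fixpoint charmap (X : DeltaComplex) (k : nat) : cell X k -> list R -> RawPt X :=
  match k with
  | O => fun c l => existT _ O (c, l)
  | S k' => fun c l =>
      match find_zero l with
      | Some i => charmap X k' (face X k' i c) (remove_nth i l)
      | None => existT _ (S k') (c, l)
      end
  end.

(* weak topology: U is open iff sigma_c^{-1}(U) is open in Delta^k for all c *)
Definition is_open (X : DeltaComplex) (U : RawPt X -> Prop) : Prop :=
  forall (k : nat) (c : cell X k) (l : list R),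
    in_simplex k l -> U (charmap X k c l) ->
    exists eps, 0 < eps /\
      forall l', in_simplex k l' -> close eps l l' -> U (charmap X k c l').

Definition connected (X : DeltaComplex) : Prop :=
  forall U : RawPt X -> Prop,
    is_open X U -> is_open X (fun p => ~ U p) ->
    (forall p, IsPt X p -> U p) \/ (forall p, IsPt X p -> ~ U p).

Definition finite_dimensional (X : DeltaComplex) : Prop :=
  exists n : nat, forall k : nat, (n < k)%nat -> cell X k -> False.

Definition one_zero_cell (X : DeltaComplex) : Prop :=
  exists v : cell X 0, forall w : cell X 0, w = v.

Record DMap (D C : DeltaComplex) := {
  cmap : forall k : nat, cell D k -> cell C k;
  cmap_face : forall (k i : nat) (c : cell D (S k)), (i <= S k)%nat ->
      cmap k (face D k i c) = face C k i (cmap (S k) c)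
}.

Definition realize {D C : DeltaComplex} (f : DMap D C) (p : RawPt D) : RawPt C :=
  existT _ (projT1 p) (cmap D C f (projT1 p) (fst (projT2 p)), snd (projT2 p)).

Definition continuous {D C : DeltaComplex} (f : DMap D C) : Prop :=
  forall V, is_open C V -> is_open D (fun p => V (realize f p)).

Definition local_homeo_onto_image {D C : DeltaComplex} (f : DMap D C) : Prop :=
  forall p, IsPt D p ->
    exists U : RawPt D -> Prop,
      is_open D U /\ U p /\
      (forall q q', IsPt D q -> IsPt D q' -> U q -> U q' ->
         realize f q = realize f q' -> q = q') /\
      (forall V, is_open D V ->
         exists W, is_open C W /\
           forall y, IsPt C y ->
             ((exists q, IsPt D q /\ V q /\ U q /\ realize f q = y) <->
              (W y /\ exists q, IsPt D q /\ U q /\ realize f q = y))).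

Definition immersion {D C : DeltaComplex} (f : DMap D C) : Prop :=
  continuous f /\ local_homeo_onto_image f.

(* Main.v *)
Require Import Defs.
From Stdlib Require Import Reals List Arith Lia Lra ClassicalEpsilon Eqdep_dec.
Import ListNotations.
Open Scope R_scope.

Lemma lsum_cons : forall x l, lsum (x :: l) = x + lsum l.
Proof. reflexivity. Qed.

Lemma find_zero_some : forall l i, find_zero l = Some i -> (i < length l)%nat /\ nth i l 0 = 0.
Proof.
  induction l as [|x l IH]; simpl; intros i H; [discriminate|].
  destruct (Req_EM_T x 0) as [Hx|Hx].
  - inversion H; subst. split; [lia|reflexivity].
  - destruct (find_zero l) as [j|] eqn:E; [|discriminate].
    inversion H; subst. destruct (IH j eq_refl). split; [lia|assumption].
Qed.

Lemma find_zero_none : forall l, find_zero l = None -> Forall (fun x => x <> 0) l.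
Proof.
  induction l as [|x l IH]; simpl; intros H; constructor.
  - destruct (Req_EM_T x 0); [discriminate|assumption].
  - destruct (Req_EM_T x 0); [discriminate|]. destruct (find_zero l); [discriminate|auto].
Qed.

Lemma remove_nth_length : forall l i, (i < length l)%nat -> length (remove_nth i l) = pred (length l).
Proof.
  induction l as [|x l IH]; intros [|i] H; simpl in *; try lia; try reflexivity.
  rewrite IH by lia. destruct l; simpl in *; lia.
Qed.

Lemma remove_nth_lsum : forall l i, nth i l 0 = 0 -> lsum (remove_nth i l) = lsum l.
Proof.
  unfold lsum; induction l as [|x l IH]; intros [|i] H; simpl in *; try reflexivity.
  - subst. lra.
  - rewrite IH; auto.
Qed.

Lemma remove_nth_Forall : forall (P : R -> Prop) l i, Forall P l -> Forall P (remove_nth i l).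
Proof.
  induction l as [|x l IH]; intros [|i] H; simpl; try constructor; inversion H; subst; auto.
Qed.

Fixpoint nz (l : list R) : nat :=
  match l with [] => 0%nat | x :: l' => ((if Req_EM_T x 0 then 0 else 1) + nz l')%nat end.

Lemma nz_remove : forall l i, nth i l 0 = 0 -> nz (remove_nth i l) = nz l.
Proof.
  induction l as [|x l IH]; intros [|i] H; simpl in *; try reflexivity.
  - destruct (Req_EM_T x 0); [reflexivity|contradiction].
  - rewrite IH; auto.
Qed.

Lemma nz_none : forall l, Forall (fun x => x <> 0) l -> nz l = length l.
Proof.
  induction l as [|x l IH]; intros H; simpl; [reflexivity|]. inversion H; subst.
  destruct (Req_EM_T x 0); [contradiction|]. rewrite IH; auto.
Qed.

Lemma charmap_dim : forall X k (c : cell X k) l, length l = S k ->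
  projT1 (charmap X k c l) = pred (nz l).
Proof.
  intros X k; induction k as [|k IH]; intros c l Hl; simpl.
  - destruct l as [|x [|y l]]; simpl in Hl; try discriminate. simpl.
    destruct (Req_EM_T x 0); reflexivity.
  - destruct (find_zero l) as [i|] eqn:E.
    + destruct (find_zero_some _ _ E) as [Hi Hz].
      rewrite IH. { rewrite nz_remove; auto. }
      rewrite remove_nth_length; lia.
    + simpl. rewrite nz_none by (apply find_zero_none; auto). lia.
Qed.

Lemma charmap_pt : forall X k (c : cell X k) l, in_simplex k l -> IsPt X (charmap X k c l).
Proof.
  intros X k; induction k as [|k IH]; intros c l [Hl [Hp Hs]]; simpl.
  - unfold IsPt; simpl. destruct l as [|x [|y l]]; simpl in Hl; try discriminate.
    inversion Hp; subst. unfold lsum in Hs; simpl in Hs.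
    split; [reflexivity|split; [constructor; [lra|constructor]|unfold lsum; simpl; lra]].
  - destruct (find_zero l) as [i|] eqn:E.
    + destruct (find_zero_some _ _ E) as [Hi Hz]. apply IH.
      split; [rewrite remove_nth_length; lia|].
      split; [apply remove_nth_Forall; auto| rewrite remove_nth_lsum; auto].
    + unfold IsPt; simpl. split; [exact Hl|split; [|exact Hs]].
      apply find_zero_none in E. rewrite Forall_forall in *.
      intros x Hx. specialize (Hp x Hx). specialize (E x Hx).
      destruct Hp as [H|H]; [exact H|]. subst. contradiction.
Qed.
Lemma nz_pos_ex : forall l, (1 <= nz l)%nat -> exists i, nth i l 0 <> 0.
Proof.
  induction l as [|x l IH]; simpl; intros H; [lia|].
  destruct (Req_EM_T x 0) as [Hx|Hx].
  - destruct (IH ltac:(lia)) as [i Hi]. exists (S i). exact Hi.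
  - exists 0%nat. exact Hx.
Qed.

Lemma nz_two : forall l, (2 <= nz l)%nat -> exists i j, i <> j /\ nth i l 0 <> 0 /\ nth j l 0 <> 0.
Proof.
  induction l as [|x l IH]; simpl; intros H; [lia|].
  destruct (Req_EM_T x 0) as [Hx|Hx].
  - destruct (IH ltac:(lia)) as [i [j [Hij [Hi Hj]]]]. exists (S i), (S j). auto.
  - destruct (nz_pos_ex l ltac:(lia)) as [j Hj]. exists 0%nat, (S j). auto.
Qed.

Lemma nz_pos_of : forall l i, nth i l 0 <> 0 -> (1 <= nz l)%nat.
Proof.
  induction l as [|x l IH]; intros [|i] H; simpl in *; try (exfalso; apply H; reflexivity).
  - destruct (Req_EM_T x 0); [contradiction|lia].
  - specialize (IH i H). destruct (Req_EM_T x 0); lia.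
Qed.

Lemma two_nz : forall l i j, i <> j -> nth i l 0 <> 0 -> nth j l 0 <> 0 -> (2 <= nz l)%nat.
Proof.
  induction l as [|x l IH]; intros [|i] [|j] Hij Hi Hj; simpl in *;
    try (exfalso; apply Hi; reflexivity); try lia.
  - destruct (Req_EM_T x 0); [contradiction|]. pose proof (nz_pos_of l j Hj). lia.
  - destruct (Req_EM_T x 0); [contradiction|]. pose proof (nz_pos_of l i Hi). lia.
  - pose proof (IH i j ltac:(lia) Hi Hj). destruct (Req_EM_T x 0); lia.
Qed.

Lemma nth_nz_lt : forall (l : list R) i, nth i l 0 <> 0 -> (i < length l)%nat.
Proof.
  intros l i H. destruct (Nat.lt_ge_cases i (length l)) as [H1|H1]; auto.
  rewrite nth_overflow in H by lia. contradiction.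
Qed.

Lemma nth_nonneg : forall l i, Forall (fun x => 0 <= x) l -> 0 <= nth i l 0.
Proof.
  induction l as [|x l IH]; intros [|i] H; simpl; try lra; inversion H; subst; auto.
Qed.

Definition close_mono : forall e e' l l', close e l l' -> e <= e' -> close e' l l'.
Proof.
  intros e e' l l' [H1 H2] H. split; auto. intros i Hi. specialize (H2 i Hi). lra.
Qed.

Lemma dim_open : forall X k (c : cell X k) l, in_simplex k l ->
  (1 <= projT1 (charmap X k c l))%nat ->
  exists e, 0 < e /\ forall l', in_simplex k l' -> close e l l' ->
     (1 <= projT1 (charmap X k c l'))%nat.
Proof.
  intros X k c l [Hl [Hp Hs]] H. rewrite charmap_dim in H by auto.
  destruct (nz_two l ltac:(lia)) as [i [j [Hij [Hi Hj]]]].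
  pose proof (nth_nonneg l i Hp). pose proof (nth_nonneg l j Hp).
  assert (0 < nth i l 0) by (destruct H0; [auto|congruence]).
  assert (0 < nth j l 0) by (destruct H1; [auto|congruence]).
  exists (Rmin (nth i l 0) (nth j l 0)). split; [apply Rmin_pos; auto|].
  intros l' [Hl' _] [Hlen Hc]. rewrite charmap_dim by auto.
  pose proof (Hc i (nth_nz_lt _ _ Hi)). pose proof (Hc j (nth_nz_lt _ _ Hj)).
  pose proof (Rmin_l (nth i l 0) (nth j l 0)). pose proof (Rmin_r (nth i l 0) (nth j l 0)).
  assert (nth i l' 0 <> 0).
  { intro E. rewrite E in H4. rewrite Rminus_0_r, Rabs_right in H4 by lra. lra. }
  assert (nth j l' 0 <> 0).
  { intro E. rewrite E in H5. rewrite Rminus_0_r, Rabs_right in H5 by lra. lra. }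
  pose proof (two_nz l' i j Hij H8 H9). lia.
Qed.

Fixpoint vert (X : DeltaComplex) (k : nat) : cell X k -> nat -> cell X 0 :=
  match k with
  | O => fun c _ => c
  | S k' => fun c j => match j with
                      | O => vert X k' (face X k' 1 c) O
                      | S j' => vert X k' (face X k' 0 c) j' end
  end.

Definition bump (i j : nat) : nat := if Nat.ltb j i then j else S j.

Lemma bump_SS : forall i j, bump (S i) (S j) = S (bump i j).
Proof. intros. unfold bump. replace (Nat.ltb (S j) (S i)) with (Nat.ltb j i) by reflexivity. destruct (Nat.ltb j i); reflexivity. Qed.
Lemma bump_0S : forall i, bump (S i) 0 = 0%nat.
Proof. reflexivity. Qed.
Lemma bump_0 : forall j, bump 0 j = S j.
Proof. intros; unfold bump; destruct j; reflexivity. Qed.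

Lemma vert_face : forall X k (c : cell X (S k)) i j, (i <= S k)%nat -> (j <= k)%nat ->
  vert X k (face X k i c) j = vert X (S k) c (bump i j).
Proof.
  intros X k; induction k as [|k IH]; intros c i j Hi Hj.
  - assert (j = 0%nat) by lia. subst.
    destruct i as [|[|i]]; [reflexivity|reflexivity|lia].
  - destruct j as [|j].
    + destruct i as [|[|i]]; [reflexivity|reflexivity|].
      rewrite bump_0S. simpl.
      rewrite (face_rel X k 1 (S (S i)) c) by lia.
      replace (S (S i) - 1)%nat with (S i) by lia.
      rewrite (IH _ (S i) 0%nat) by lia. rewrite bump_0S. reflexivity.
    + destruct i as [|i].
      * reflexivity.
      * rewrite bump_SS. simpl.
        rewrite (face_rel X k 0 (S i) c) by lia.
        replace (S i - 1)%nat with i by lia.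
        rewrite IH by lia. reflexivity.
Qed.
Fixpoint ws (g : nat -> R) (l : list R) : R :=
  match l with [] => 0 | x :: l' => g O * x + ws (fun j => g (S j)) l' end.

Lemma ws_ext : forall l g g', (forall j, (j < length l)%nat -> g j = g' j) -> ws g l = ws g' l.
Proof.
  induction l as [|x l IH]; intros g g' H; simpl; [reflexivity|].
  rewrite (H 0%nat) by (simpl; lia). f_equal. apply IH. intros j Hj. apply H. simpl; lia.
Qed.

Lemma ws_remove : forall l i g, nth i l 0 = 0 ->
  ws (fun j => g (bump i j)) (remove_nth i l) = ws g l.
Proof.
  induction l as [|x l IH]; intros [|i] g H; simpl in *; try reflexivity.
  - subst. rewrite (ws_ext l _ (fun j => g (S j))) by (intros; rewrite bump_0; reflexivity). ring.
  - rewrite bump_0S. f_equal.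
    rewrite (ws_ext _ _ (fun j => (fun j => g (S j)) (bump i j)))
      by (intros; rewrite bump_SS; reflexivity).
    exact (IH i (fun j => g (S j)) H).
Qed.

Lemma ws_zero : forall l g, (forall j, g j = 0) -> ws g l = 0.
Proof.
  induction l as [|x l IH]; intros g H; simpl; [reflexivity|]. rewrite H, IH; auto. ring.
Qed.

Lemma ws_cont : forall l g, (forall j, Rabs (g j) <= 1) -> forall d, 0 < d ->
  exists e, 0 < e /\ forall l', close e l l' -> Rabs (ws g l - ws g l') < d.
Proof.
  induction l as [|x l IH]; intros g Hg d Hd.
  - exists 1; split; [lra|]. intros l' [Hlen _]. destruct l'; simpl in Hlen; [|discriminate].
    simpl. rewrite Rminus_0_r, Rabs_R0. exact Hd.
  - destruct (IH (fun j => g (S j)) (fun j => Hg (S j)) (d/2)) as [e1 [He1 H1]]; [lra|].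
    exists (Rmin e1 (d/2)); split; [apply Rmin_pos; lra|].
    intros [|x' l'] [Hlen Hc]; simpl in Hlen; [discriminate|].
    assert (H0 : Rabs (x - x') < Rmin e1 (d/2)) by (apply (Hc 0%nat); simpl; lia).
    assert (Ht : Rabs (ws (fun j => g (S j)) l - ws (fun j => g (S j)) l') < d/2).
    { apply H1. split; [simpl in *; lia|]. intros i Hi. specialize (Hc (S i)). simpl in Hc.
      apply Rlt_le_trans with (Rmin e1 (d/2)); [apply Hc; lia| apply Rmin_l]. }
    simpl.
    replace (g 0%nat * x + ws (fun j => g (S j)) l - (g 0%nat * x' + ws (fun j => g (S j)) l'))
      with (g 0%nat * (x - x') + (ws (fun j => g (S j)) l - ws (fun j => g (S j)) l')) by ring.
    eapply Rle_lt_trans; [apply Rabs_triang|].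
    rewrite Rabs_mult.
    assert (Rabs (g 0%nat) * Rabs (x - x') <= Rabs (x - x')).
    { rewrite <- (Rmult_1_l (Rabs (x - x'))) at 2.
      apply Rmult_le_compat_r; [apply Rabs_pos| apply Hg]. }
    pose proof (Rmin_r e1 (d/2)). lra.
Qed.

Definition ind {A : Type} (v u : A) : R := if excluded_middle_informative (u = v) then 1 else 0.

Lemma ind_bound : forall A (v u : A), Rabs (ind v u) <= 1.
Proof.
  intros. unfold ind. destruct excluded_middle_informative;
  [rewrite Rabs_R1|rewrite Rabs_R0]; lra.
Qed.

Definition wt (X : DeltaComplex) (v : cell X 0) (k : nat) (c : cell X k) (l : list R) : R :=
  ws (fun j => ind v (vert X k c j)) l.

Definition weight (X : DeltaComplex) (v : cell X 0) (q : RawPt X) : R :=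
  wt X v (projT1 q) (fst (projT2 q)) (snd (projT2 q)).

Lemma weight_charmap : forall X v k (c : cell X k) l, length l = S k ->
  weight X v (charmap X k c l) = wt X v k c l.
Proof.
  intros X v k; induction k as [|k IH]; intros c l Hl; [reflexivity|].
  simpl. destruct (find_zero l) as [i|] eqn:E; [|reflexivity].
  destruct (find_zero_some _ _ E) as [Hi Hz].
  assert (Hlen : length (remove_nth i l) = S k) by (rewrite remove_nth_length; lia).
  rewrite IH by auto. unfold wt.
  transitivity (ws (fun j => (fun j => ind v (vert X (S k) c j)) (bump i j)) (remove_nth i l)).
  - apply ws_ext. intros j Hj. rewrite vert_face by lia. reflexivity.
  - exact (ws_remove l i (fun j => ind v (vert X (S k) c j)) Hz).
Qed.

Lemma weight_cont : forall X v k (c : cell X k) l, in_simplex k l -> forall d, 0 < d ->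
  exists e, 0 < e /\ forall l', in_simplex k l' -> close e l l' ->
    Rabs (weight X v (charmap X k c l) - weight X v (charmap X k c l')) < d.
Proof.
  intros X v k c l [Hl _] d Hd.
  destruct (ws_cont l (fun j => ind v (vert X k c j)) (fun j => ind_bound _ _ _) d Hd) as [e [He H]].
  exists e; split; auto. intros l' [Hl' _] Hc.
  rewrite !weight_charmap by auto. apply H; auto.
Qed.

Lemma weight0 : forall X v (u : cell X 0) l,
  weight X v (existT _ 0%nat (u, l)) > 1/2 -> u = v.
Proof.
  intros X v u l H. unfold weight, wt in H. simpl in H. unfold ind in H.
  destruct (excluded_middle_informative (u = v)) as [E|E]; auto.
  rewrite ws_zero in H by reflexivity. lra.
Qed.

Lemma open_simplex0 : forall l, in_open_simplex 0 l -> l = [1].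
Proof.
  intros l [Hl [_ Hs]]. destruct l as [|x [|y l]]; simpl in Hl; try discriminate.
  unfold lsum in Hs; simpl in Hs. f_equal. lra.
Qed.

Lemma weight_v1 : forall X v, weight X v (existT _ 0%nat (v, [1])) = 1.
Proof.
  intros. unfold weight, wt, ind; simpl.
  destruct (excluded_middle_informative (v = v)); [ring|congruence].
Qed.
Definition Ecell (C : DeltaComplex) (k : nat) : Type :=
  match k with O => unit | S k' => cell C (S k') end.

Definition Eface (C : DeltaComplex) (k : nat) (i : nat) : Ecell C (S k) -> Ecell C k :=
  match k return Ecell C (S k) -> Ecell C k with
  | O => fun _ => tt
  | S k' => fun c => face C (S k') i c
  end.

Lemma Eface_rel : forall C (k i j : nat) (c : Ecell C (S (S k))),
  (i < j)%nat -> (j <= S (S k))%nat ->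
  Eface C k i (Eface C (S k) j c) = Eface C k (j - 1) (Eface C (S k) i c).
Proof.
  intros C [|k] i j c H1 H2; [reflexivity|]. simpl. apply face_rel; auto.
Qed.

Definition Ecomp (C : DeltaComplex) : DeltaComplex :=
  {| cell := Ecell C; face := Eface C; face_rel := Eface_rel C |}.

Definition fmap (C : DeltaComplex) (k : nat) : cell C k -> cell (Ecomp C) k :=
  match k return cell C k -> Ecell C k with O => fun _ => tt | S k' => fun c => c end.

Lemma fmap_face : forall C k i (c : cell C (S k)),
  fmap C k (face C k i c) = face (Ecomp C) k i (fmap C (S k) c).
Proof. intros C [|k] i c; reflexivity. Qed.

Definition F (C : DeltaComplex) : DMap C (Ecomp C) :=
  {| cmap := fmap C; cmap_face := fun k i c _ => fmap_face C k i c |}.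

Lemma realize_charmap : forall C k (c : cell C k) l,
  realize (F C) (charmap C k c l) = charmap (Ecomp C) k (fmap C k c) l.
Proof.
  intros C k; induction k as [|k IH]; intros c l; [reflexivity|].
  simpl. destruct (find_zero l) as [i|]; [|reflexivity].
  rewrite IH. rewrite fmap_face. reflexivity.
Qed.

Lemma F_cont : forall C, continuous (F C).
Proof.
  intros C V HV k c l Hs HVl. cbv beta in *. rewrite realize_charmap in HVl.
  destruct (HV k (fmap C k c) l Hs HVl) as [e [He H]].
  exists e; split; auto. intros l' Hs' Hc. rewrite realize_charmap. apply H; auto.
Qed.

Lemma realize_eq : forall C (q q' : RawPt C), realize (F C) q = realize (F C) q' ->
  projT1 q = projT1 q' /\ snd (projT2 q) = snd (projT2 q').
Proof.
  intros C [m [c l]] [m' [c' l']] H. unfold realize in H; simpl in H.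
  assert (m = m') by (apply (f_equal (@projT1 _ _)) in H; exact H). subst m'.
  apply inj_pair2_eq_dec in H; [|exact Nat.eq_dec]. inversion H. simpl; auto.
Qed.

Lemma realize_inj : forall C (q q' : RawPt C), realize (F C) q = realize (F C) q' ->
  (1 <= projT1 q)%nat -> q = q'.
Proof.
  intros C [m [c l]] [m' [c' l']] H Hm. unfold realize in H; simpl in H, Hm.
  assert (m = m') by (apply (f_equal (@projT1 _ _)) in H; exact H). subst m'.
  apply inj_pair2_eq_dec in H; [|exact Nat.eq_dec].
  destruct m as [|m]; [lia|]. simpl in H. inversion H. reflexivity.
Qed.

Definition v1 (C : DeltaComplex) (v : cell C 0) : RawPt C := existT _ 0%nat (v, [1]).

Definition WcC (C : DeltaComplex) (v : cell C 0) (V : RawPt C -> Prop) (q : RawPt C) : Prop :=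
  match q with
  | existT _ O _ => V (v1 C v)
  | existT _ (S k) (c, l) =>
      weight C v (existT _ (S k) (c, l)) < 1/2 \/
      (weight C v (existT _ (S k) (c, l)) > 1/2 /\ V (existT _ (S k) (c, l)))
  end.

Definition Wv (C : DeltaComplex) (v : cell C 0) (V : RawPt C -> Prop) (y : RawPt (Ecomp C)) : Prop :=
  match y with
  | existT _ O _ => V (v1 C v)
  | existT _ (S k) (c, l) =>
      weight C v (existT _ (S k) (c, l)) < 1/2 \/
      (weight C v (existT _ (S k) (c, l)) > 1/2 /\ V (existT _ (S k) (c, l)))
  end.

Lemma Wv_realize : forall C v V q, Wv C v V (realize (F C) q) <-> WcC C v V q.
Proof. intros C v V [[|k] [c l]]; reflexivity. Qed.

Lemma q_v1 : forall C v (q : RawPt C), IsPt C q -> weight C v q > 1/2 ->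
  projT1 q = 0%nat -> q = v1 C v.
Proof.
  intros C v [[|m] [u l]] Hq Hw Hm; simpl in Hm; [|discriminate].
  apply weight0 in Hw. subst u. apply open_simplex0 in Hq. simpl in Hq. subst. reflexivity.
Qed.

Lemma WcC_of : forall C v V (q : RawPt C), IsPt C q -> V q -> weight C v q > 1/2 -> WcC C v V q.
Proof.
  intros C v V q Hq HV Hw. destruct q as [[|m] [u l]] eqn:Eq.
  - simpl. rewrite <- Eq in *. rewrite <- (q_v1 C v q); subst; auto.
  - simpl. right. auto.
Qed.

Lemma WcC_of2 : forall C v V (q : RawPt C), V (v1 C v) -> weight C v q < 1/2 -> WcC C v V q.
Proof. intros C v V [[|m] [u l]] HV Hw; simpl; auto. Qed.

Lemma WcC_of3 : forall C v V (q : RawPt C), (1 <= projT1 q)%nat -> weight C v q < 1/2 -> WcC C v V q.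
Proof. intros C v V [[|m] [u l]] Hm Hw; simpl in *; [lia|auto]. Qed.

Lemma Rabs_lt_elim : forall a b d, Rabs (a - b) < d -> a - d < b /\ b < a + d.
Proof.
  intros a b d H. destruct (Rcase_abs (a - b)).
  - rewrite Rabs_left in H by auto. lra.
  - rewrite Rabs_right in H by auto. lra.
Qed.

Lemma WcC_open : forall C v V, is_open C V -> forall k (c : cell C k) l, in_simplex k l ->
  WcC C v V (charmap C k c l) ->
  exists e, 0 < e /\ forall l', in_simplex k l' -> close e l l' -> WcC C v V (charmap C k c l').
Proof.
  intros C v V HV k c l Hs HW.
  pose proof (charmap_pt C k c l Hs) as Hpt.
  destruct (charmap C k c l) as [[|m] [u lq]] eqn:Eq.
  - simpl in HW.
    destruct (excluded_middle_informative (u = v)) as [Huv|Huv].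
    + subst u. apply open_simplex0 in Hpt. simpl in Hpt. subst lq.
      assert (HVq : V (charmap C k c l)) by (rewrite Eq; exact HW).
      destruct (HV k c l Hs HVq) as [e1 [He1 H1]].
      destruct (weight_cont C v k c l Hs (1/2) ltac:(lra)) as [e2 [He2 H2]].
      rewrite Eq, weight_v1 in H2.
      exists (Rmin e1 e2). split; [apply Rmin_pos; auto|]. intros l' Hs' Hc.
      apply WcC_of.
      * apply charmap_pt; auto.
      * apply H1; auto. eapply close_mono; [exact Hc|apply Rmin_l].
      * assert (H := H2 l' Hs' ltac:(eapply close_mono; [exact Hc|apply Rmin_r])).
        apply Rabs_lt_elim in H. lra.
    + assert (Hw0 : weight C v (existT _ 0%nat (u, lq)) = 0).
      { unfold weight, wt, ind; simpl.
        destruct (excluded_middle_informative (u = v)); [contradiction|].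
        apply ws_zero; reflexivity. }
      destruct (weight_cont C v k c l Hs (1/2) ltac:(lra)) as [e2 [He2 H2]].
      rewrite Eq, Hw0 in H2.
      exists e2. split; auto. intros l' Hs' Hc.
      apply WcC_of2; auto. assert (H := H2 l' Hs' Hc). apply Rabs_lt_elim in H. lra.
  - assert (Hdim : (1 <= projT1 (charmap C k c l))%nat) by (rewrite Eq; simpl; lia).
    destruct (dim_open C k c l Hs Hdim) as [e3 [He3 H3]].
    simpl in HW. destruct HW as [HW|[HW HVq]].
    + destruct (weight_cont C v k c l Hs (1/2 - weight C v (existT _ (S m) (u, lq))) ltac:(lra))
        as [e2 [He2 H2]].
      rewrite Eq in H2.
      exists (Rmin e2 e3). split; [apply Rmin_pos; auto|]. intros l' Hs' Hc.
      apply WcC_of3.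
      * apply H3; auto. eapply close_mono; [exact Hc|apply Rmin_r].
      * assert (H := H2 l' Hs' ltac:(eapply close_mono; [exact Hc|apply Rmin_l])).
        apply Rabs_lt_elim in H. lra.
    + rewrite <- Eq in HVq.
      destruct (HV k c l Hs HVq) as [e1 [He1 H1]].
      destruct (weight_cont C v k c l Hs (weight C v (existT _ (S m) (u, lq)) - 1/2) ltac:(lra))
        as [e2 [He2 H2]].
      rewrite Eq in H2.
      exists (Rmin e1 e2). split; [apply Rmin_pos; auto|]. intros l' Hs' Hc.
      apply WcC_of.
      * apply charmap_pt; auto.
      * apply H1; auto. eapply close_mono; [exact Hc|apply Rmin_l].
      * assert (H := H2 l' Hs' ltac:(eapply close_mono; [exact Hc|apply Rmin_r])).
        apply Rabs_lt_elim in H. lra.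
Qed.
Lemma Wv_open : forall C v V, is_open C V -> is_open (Ecomp C) (Wv C v V).
Proof.
  intros C v V HV [|k] e l Hs HW.
  - exists 1. split; [lra|]. intros l' _ _. exact HW.
  - assert (HW' : WcC C v V (charmap C (S k) e l)).
    { apply Wv_realize. rewrite realize_charmap. exact HW. }
    destruct (WcC_open C v V HV (S k) e l Hs HW') as [eps [He H]].
    exists eps; split; auto. intros l' Hs' Hc.
    change (Wv C v V (charmap (Ecomp C) (S k) (fmap C (S k) e) l')).
    rewrite <- realize_charmap. apply Wv_realize. apply H; auto.
Qed.

Definition Wd (C : DeltaComplex) (V : RawPt C -> Prop) (y : RawPt (Ecomp C)) : Prop :=
  match y with
  | existT _ O _ => False
  | existT _ (S k) (c, l) => V (existT _ (S k) (c, l))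
  end.

Lemma Wd_realize : forall C V q, Wd C V (realize (F C) q) <-> ((1 <= projT1 q)%nat /\ V q).
Proof.
  intros C V [[|k] [c l]]; simpl; split; intros H; try tauto; try (destruct H; lia).
  split; [lia|exact H].
Qed.

Lemma Wd_open : forall C V, is_open C V -> is_open (Ecomp C) (Wd C V).
Proof.
  intros C V HV [|k] e l Hs HW.
  - simpl in HW. contradiction.
  - assert (HW' : (1 <= projT1 (charmap C (S k) e l))%nat /\ V (charmap C (S k) e l)).
    { apply Wd_realize. rewrite realize_charmap. exact HW. }
    destruct HW' as [Hd HVq].
    destruct (dim_open C (S k) e l Hs Hd) as [e3 [He3 H3]].
    destruct (HV (S k) e l Hs HVq) as [e1 [He1 H1]].
    exists (Rmin e1 e3); split; [apply Rmin_pos; auto|]. intros l' Hs' Hc.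
    change (Wd C V (charmap (Ecomp C) (S k) (fmap C (S k) e) l')).
    rewrite <- realize_charmap. apply Wd_realize. split.
    + apply H3; auto. eapply close_mono; [exact Hc|apply Rmin_r].
    + apply H1; auto. eapply close_mono; [exact Hc|apply Rmin_l].
Qed.

Lemma F_lh : forall C, local_homeo_onto_image (F C).
Proof.
  intros C [[|m] [v l]] Hp.
  -
    exists (fun q => weight C v q > 1/2). split; [|split; [|split]].
    + intros k c l0 Hs HU. cbv beta in *.
      destruct (weight_cont C v k c l0 Hs (weight C v (charmap C k c l0) - 1/2) ltac:(lra))
        as [e [He H]].
      exists e; split; auto. intros l' Hs' Hc. specialize (H l' Hs' Hc).
      apply Rabs_lt_elim in H. lra.
    + cbv beta. apply open_simplex0 in Hp. simpl in Hp. subst l.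
      rewrite weight_v1. lra.
    + intros q q' Hq Hq' HU HU' Hf.
      destruct (realize_eq C q q' Hf) as [Hd _].
      destruct (Nat.eq_dec (projT1 q) 0) as [H0|H0].
      * rewrite (q_v1 C v q), (q_v1 C v q'); auto. lia.
      * apply realize_inj; auto. lia.
    + intros V HV. exists (Wv C v V). split; [apply Wv_open; auto|].
      intros [[|k] [e ly]] Hy; split.
      * intros [q [Hq [HVq [HU Hf]]]]. split; [|exists q; auto].
        simpl. rewrite <- (q_v1 C v q); auto.
        apply (f_equal (@projT1 _ _)) in Hf. exact Hf.
      * intros [HW [q [Hq [HU Hf]]]]. exists q. split; [auto|split; [|auto]].
        rewrite (q_v1 C v q); auto.
        apply (f_equal (@projT1 _ _)) in Hf. exact Hf.
      * intros [q [Hq [HVq [HU Hf]]]].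
        assert (Eq : q = existT _ (S k) (e, ly)).
        { apply realize_inj; [exact Hf|].
          apply (f_equal (@projT1 _ _)) in Hf. simpl in Hf. rewrite Hf; lia. }
        subst q. split; [|exists (existT _ (S k) (e, ly)); auto].
        simpl. right. auto.
      * intros [HW [q [Hq [HU Hf]]]].
        assert (Eq : q = existT _ (S k) (e, ly)).
        { apply realize_inj; [exact Hf|].
          apply (f_equal (@projT1 _ _)) in Hf. simpl in Hf. rewrite Hf; lia. }
        subst q. exists (existT _ (S k) (e, ly)). split; [auto|split; [|auto]].
        simpl in HW, HU. destruct HW as [HW|[_ HW]]; [lra|exact HW].
  -
    exists (fun q => (1 <= projT1 q)%nat). split; [|split; [|split]].
    + intros k c l0 Hs HU. apply dim_open; auto.
    + simpl. lia.
    + intros q q' Hq Hq' HU HU' Hf. apply realize_inj; auto.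
    + intros V HV. exists (Wd C V). split; [apply Wd_open; auto|].
      intros [[|k] [e ly]] Hy; split.
      * intros [q [Hq [HVq [HU Hf]]]].
        apply (f_equal (@projT1 _ _)) in Hf. simpl in Hf. lia.
      * intros [HW _]. simpl in HW. contradiction.
      * intros [q [Hq [HVq [HU Hf]]]].
        assert (Eq : q = existT _ (S k) (e, ly)) by (apply realize_inj; auto).
        subst q. split; [|exists (existT _ (S k) (e, ly)); auto]. simpl. exact HVq.
      * intros [HW [q [Hq [HU Hf]]]].
        assert (Eq : q = existT _ (S k) (e, ly)) by (apply realize_inj; auto).
        subst q. exists (existT _ (S k) (e, ly)). split; [auto|split; [|auto]]. exact HW.
Qed.

Theorem mainTheorem3 (C : DeltaComplex) :
  finite_dimensional C -> connected C ->
  exists (E : DeltaComplex) (f : DMap C E), immersion f /\ one_zero_cell E.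
Proof.
  intros _ _. exists (Ecomp C), (F C). split.
  - split; [apply F_cont|apply F_lh].
  - exists tt. intros []. reflexivity.
Qed.
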